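(* Let $1\le d<n$, $r=d(n-d)$. (i) For $\underline i,\underline j\in I(d,n)$, $\underline i\le\underline j$ if and only if $\underline j$ can be obtained from $\underline i$ by applying a suitable monomial in the root operators $f_{s,h}$. (ii) Let $\mathfrak C:\underline i_r>\cdots>\underline i_0$ be a maximal chain in $I(d,n)$. Then for each $t=1,\dots,r$ there exist $s_t,h_t$ with $\underline i_t=f_{s_t,h_t}(\underline i_{t-1})$; moreover each root operator $f_{s,h}$ with $1\le s\le n-1$, $1\le h\le d$, $n-d+h>s\ge h$ appears in the list $(f_{s_t,h_t}\mid t=1,\dots,r)$ exactly once. (iii) If moreover $\underline i_h$ does not contain $n$ for $h=1,\dots,t$ and $\underline i_h$ contains $n$ for all $t<h\le r$, then $\underline i_{t+1}=f_{n-1,d}(\underline i_t)$, i.e. $s_{t+1}=n-1$ and $h_{t+1}=d$.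
   Context: $I(d,n)$ is the set of $d$-element subsets of $\{1,\dots,n\}$ written as increasing sequences $i_1\cdots i_d$, with partial order $\underline i\le\underline j$ iff $i_k\le j_k$ for all $k$. Maximal chains are maximal totally ordered subsets; they have the form $\underline i_r>\cdots>\underline i_0$ from $(n-d+1)\cdots n$ down to $12\cdots d$. For $1\le h\le d$ and $h\le s<n-d+h$, $f_{s,h}$ acts on $I(d,n)\sqcup\{0\}$ by $f_{s,h}(0)=0$, $f_{s,h}(i_1\cdots i_d)=i_1\cdots i_{h-1}(s+1)i_{h+1}\cdots i_d$ if $i_h=s$ and ($h=d$ or $i_{h+1}\ge s+2$), and $0$ otherwise. *)

(* Defs.v *)
From mathcomp Require Import all_boot.
Set Implicit Arguments. Unset Strict Implicit. Unset Printing Implicit Defensive.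

(* An element of I(d,n): increasing sequence i_1 < ... < i_d with entries in
   {1,...,n}. Positions are 1-based in the paper, 0-based in seq (nth). *)
Definition inI (d n : nat) (i : seq nat) : bool :=
  [&& size i == d, sorted ltn i & all (fun k => 0 < k <= n) i].

Definition leI (i j : seq nat) : bool := all2 leq i j.
Definition ltI (i j : seq nat) : bool := leI i j && (i != j).

Definition isChain (d n : nat) (C : seq nat -> Prop) : Prop :=
  (forall x, C x -> inI d n x) /\
  (forall x y, C x -> C y -> leI x y \/ leI y x).

Definition maxChain (d n : nat) (C : seq nat -> Prop) : Prop :=
  isChain d n C /\
  (forall C' : seq nat -> Prop, isChain d n C' ->
     (forall x, C x -> C' x) -> forall x, C' x -> C x).

(* Root operator f_{s,h} on I(d,n) ⊔ {0}; 0 is represented by None.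
   f_{s,h}(i) replaces i_h = s by s+1 when h = d or i_{h+1} >= s+2. *)
Definition rootop (d s h : nat) (i : seq nat) : option (seq nat) :=
  if (nth 0 i h.-1 == s) && ((h == d) || (s.+2 <= nth 0 i h))
  then Some (set_nth 0 i h.-1 s.+1) else None.

Definition rootop0 (d s h : nat) (o : option (seq nat)) : option (seq nat) :=
  obind (rootop d s h) o.

Definition validop (d n : nat) (p : nat * nat) : bool :=
  (1 <= p.2 <= d) && (p.2 <= p.1 < n - d + p.2).

(* A monomial in the root operators, given as a word (list of indices),
   applied to an element of I(d,n) ⊔ {0}. *)
Definition applyops (d : nat) (ops : seq (nat * nat)) (o : option (seq nat))
  : option (seq nat) :=
  foldr (fun p acc => rootop0 d p.1 p.2 acc) o ops.

(* Main.v *)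
Require Import Defs.
From mathcomp Require Import all_boot zify.
Set Implicit Arguments. Unset Strict Implicit.

Lemma leIP x y : leI x y <-> size x = size y /\ forall k, nth 0 x k <= nth 0 y k.
Proof.
rewrite /leI; elim: x y => [|a x IH] [|b y] /=.
- by split => // _; split => // k; rewrite nth_nil.
- by split => // -[].
- by split => // -[].
- split.
  + by move/andP=> [ab /IH [-> H]]; split => // -[|k] //=.
  + move=> [[/eqP Hs] H]; apply/andP; split; first exact: (H 0).
    by apply/IH; split; [apply/eqP|move=> k; apply: (H k.+1)].
Qed.

Lemma leI_refl x : leI x x.
Proof. by apply/leIP. Qed.

Lemma leI_trans x y z : leI x y -> leI y z -> leI x z.
Proof.
move=> /leIP [s1 H1] /leIP [s2 H2]; apply/leIP; split; first by rewrite s1.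
by move=> k; apply: leq_trans (H1 k) (H2 k).
Qed.

Lemma leI_anti x y : leI x y -> leI y x -> x = y.
Proof.
move=> /leIP [s1 H1] /leIP [s2 H2]; apply: (eq_from_nth (x0:=0)) => // k _.
by apply/eqP; rewrite eqn_leq H1 H2.
Qed.

Lemma sumn_leI x y : leI x y -> sumn x <= sumn y.
Proof.
rewrite /leI; elim: x y => [|a x IH] [|b y] //= /andP [ab /IH]; lia.
Qed.

Lemma sumn_ltI x y : leI x y -> x != y -> sumn x < sumn y.
Proof.
rewrite /leI; elim: x y => [|a x IH] [|b y] //= /andP [ab H] Hne.
have := sumn_leI H.
case: (eqVneq x y) => [exy|nxy]; last by move: (IH _ H nxy); lia.
subst; have : a != b by apply: contra Hne => /eqP ->.
lia.
Qed.

Lemma inIP d n x : inI d n x <->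
  size x = d /\ (forall i, i.+1 < d -> nth 0 x i < nth 0 x i.+1) /\
  (forall i, i < d -> 0 < nth 0 x i <= n).
Proof.
rewrite /inI; split.
- case/and3P => [/eqP sx /(sortedP 0) H1 /(all_nthP 0) H2].
  by subst; split => //.
- move=> [sx [H1 H2]]; subst; apply/and3P; split => //.
  + by apply/(sortedP 0) => i Hi; apply: H1.
  + by apply/(all_nthP 0) => i Hi; apply: H2.
Qed.

Lemma inI_gap d n x i j : inI d n x -> i <= j < d -> nth 0 x i + (j - i) <= nth 0 x j.
Proof.
move=> /inIP [_ [H1 _]]; elim: j => [|j IH] /andP [ij jd].
- have -> : i = 0 by lia.
  lia.
- case: (ltnP i j.+1) => Hij; last first.
    have -> : i = j.+1 by lia.
    lia.
  have := IH (ltac:(apply/andP; lia)); have := H1 j jd; lia.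
Qed.

Lemma inI_bounds d n x k : inI d n x -> k < d -> k < nth 0 x k /\ nth 0 x k + d <= n + k.+1.
Proof.
move=> Hx kd; have [_ [_ H3]] := (iffLR (inIP d n x) Hx).
have g1 := inI_gap Hx (ltac:(apply/andP; split; [exact: (leq0n k)|exact: kd])).
have g2 := inI_gap (i:=k) (j:=d.-1) Hx (ltac:(apply/andP; lia)).
have := H3 0 (ltac:(lia)); have := H3 d.-1 (ltac:(lia)).
lia.
Qed.

Definition bump k (x : seq nat) := set_nth 0 x k (nth 0 x k).+1.
Definition cond k (x : seq nat) := (k.+1 == size x) || ((nth 0 x k).+2 <= nth 0 x k.+1).

Lemma cover_gen x y : sorted ltn y -> leI x y -> x != y ->
  exists k, [/\ k < size x, nth 0 x k < nth 0 y k, cond k x & leI (bump k x) y].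
Proof.
elim: x y => [|a x IH] [|b y] //=; rewrite /leI /=.
move=> Hs /andP [ab Hxy] Hne.
case: (eqVneq x y) => [exy|nxy].
- subst; have Hab : a < b by rewrite ltn_neqAle ab andbT; apply: contra Hne => /eqP ->.
  exists 0; split => //.
  + rewrite /cond /=; case: y Hs {IH Hxy Hne} => [|c y] //= /andP [bc _]; lia.
  + by rewrite /bump /= Hab; apply: (leI_refl y).
- have [k [H1 H2 H3 H4]] := IH y (path_sorted Hs) Hxy nxy.
  exists k.+1; split => //.
  by rewrite /bump /= ab; exact: H4.
Qed.

Lemma leI_bump k x : k < size x -> leI x (bump k x) /\ x != bump k x.
Proof.
move=> kx; split.
- apply/leIP; rewrite /bump size_set_nth; split; first lia.
  move=> j; rewrite nth_set_nth /=; case: (j == k) /eqP => [->|//]; lia.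
- apply/eqP => E; have := congr1 (nth 0 ^~ k) E; rewrite /bump nth_set_nth /= eqxx; lia.
Qed.

Lemma bump_inI d n x k : inI d n x -> k < d -> cond k x -> nth 0 x k < n -> inI d n (bump k x).
Proof.
move=> Hx kd Hc Hn; have Hx' := Hx; move/inIP: Hx => [sx [H1 H2]]; apply/inIP; rewrite /bump.
split; first by rewrite size_set_nth; lia.
split => [i Hi|i Hi]; rewrite !nth_set_nth /=.
- have := H1 i Hi; move: Hc; rewrite /cond sx.
  have [eik|ik] := eqVneq i k.
  + subst i; rewrite (_ : (k.+1 == k) = false); last by apply/eqP; lia.
    by case/orP => /eqP ?; lia.
  + rewrite ?(negbTE ik); have [<-|ik1] := eqVneq i.+1 k; last by move=> _ H.
    rewrite ?eqxx; lia.
- have := H2 i Hi; case: (i == k) /eqP => [->|ik]; lia.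
Qed.

Lemma rootop_bump d x k : size x = d -> cond k x ->
  rootop d (nth 0 x k) k.+1 x = Some (bump k x).
Proof. by move=> sx Hc; rewrite /rootop /= eqxx /=; move: Hc; rewrite /cond sx => ->. Qed.

Lemma rootop_inv d s h x y : rootop d s h x = Some y ->
  [/\ y = set_nth 0 x h.-1 s.+1, nth 0 x h.-1 = s & (h == d) || (s.+2 <= nth 0 x h)].
Proof.
rewrite /rootop; case: ifP => // /andP [/eqP H1 H2] [<-]; split => //.
Qed.

Lemma cover d n x y : inI d n x -> inI d n y -> leI x y -> x != y ->
  exists s h z, [/\ validop d n (s, h), rootop d s h x = Some z, inI d n z,
                   leI z y & leI x z /\ x != z].
Proof.
move=> Hx Hy Hxy Hne.
have Hsy : sorted ltn y by case/and3P: Hy.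
have [k [H1 H2 H3 H4]] := cover_gen Hsy Hxy Hne.
have sx : size x = d by move/inIP: Hx => [].
have kd : k < d by rewrite -sx.
have [b1 _] := inI_bounds Hx kd; have [_ b2] := inI_bounds Hy kd.
exists (nth 0 x k), k.+1, (bump k x); split.
- rewrite /validop /=; lia.
- exact: rootop_bump.
- apply: bump_inI => //; lia.
- exact: H4.
- by apply: leI_bump; rewrite sx.
Qed.

Lemma part_i_bwd d n ops x y : all (validop d n) ops ->
  applyops d ops (Some x) = Some y -> size x = d -> size y = d /\ leI x y.
Proof.
elim: ops y => [|p ops IH] y /=.
- by move=> _ [<-] sx; split => //; apply: leI_refl.
- move=> /andP [vp vops]; rewrite /rootop0.
  case E: (applyops d ops (Some x)) => [z|] //= Hr sx.
  have [sz xz] := IH z vops E sx.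
  have [-> Hn _] := rootop_inv Hr.
  have hd : p.2.-1 < size z by move: vp; rewrite /validop sz; lia.
  have [H1 _] := leI_bump hd; move: H1; rewrite /bump Hn => H1.
  split; first by rewrite size_set_nth; lia.
  exact: leI_trans xz H1.
Qed.

Lemma part_i_fwd d n x y : inI d n x -> inI d n y -> leI x y ->
  exists ops, all (validop d n) ops /\ applyops d ops (Some x) = Some y.
Proof.
move=> Hx Hy Hxy.
have [m Hm] : exists m, sumn y - sumn x < m by exists (sumn y - sumn x).+1.
elim: m x Hx Hxy Hm => [|m IH] x Hx Hxy Hm; first lia.
case: (eqVneq x y) => [->|Hne]; first by exists [::].
have [s [h [z [Hv Hr Hz Hzy [Hxz Hnz]]]]] := cover Hx Hy Hxy Hne.
have := sumn_ltI Hxz Hnz; have := sumn_leI Hzy => l1 l2.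
have [ops [Hops Ha]] := IH z Hz Hzy (ltac:(lia)).
exists (ops ++ [:: (s, h)]); split; first by rewrite all_cat Hops /= Hv.
by rewrite /applyops foldr_cat /= Hr.
Qed.

Lemma sumn_bump k x : k < size x -> sumn (bump k x) = (sumn x).+1.
Proof.
rewrite /bump; elim: x k => [|a x IH] [|k] /= kx; try lia.
rewrite IH; lia.
Qed.

Lemma sumn_map_add m s : sumn (map (addn m) s) = m * size s + sumn s.
Proof. elim: s => [|a s IH] /=; [lia | rewrite IH; lia]. Qed.

Definition bot d := iota 1 d.
Definition top d n := iota (n - d).+1 d.

Lemma bot_inI d n : d <= n -> inI d n (bot d).
Proof.
move=> dn; apply/inIP; rewrite /bot size_iota; split => //; split => i Hi.
- by rewrite !nth_iota //; lia.
- by rewrite nth_iota //; lia.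
Qed.

Lemma top_inI d n : d <= n -> inI d n (top d n).
Proof.
move=> dn; apply/inIP; rewrite /top size_iota; split => //; split => i Hi.
- by rewrite !nth_iota //; lia.
- by rewrite nth_iota //; lia.
Qed.

Lemma bot_le d n x : inI d n x -> leI (bot d) x.
Proof.
move=> Hx; have sx : size x = d by move/inIP: Hx => [].
apply/leIP; rewrite /bot size_iota; split => // k.
case: (ltnP k d) => kd; last by rewrite nth_default ?size_iota.
rewrite nth_iota //; have [b1 _] := inI_bounds Hx kd; lia.
Qed.

Lemma le_top d n x : inI d n x -> leI x (top d n).
Proof.
move=> Hx; have sx : size x = d by move/inIP: Hx => [].
apply/leIP; rewrite /top size_iota; split => // k.
case: (ltnP k d) => kd; last by rewrite nth_default ?sx.
rewrite nth_iota //; have [_ b2] := inI_bounds Hx kd; lia.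
Qed.

Lemma sumn_top d n : sumn (top d n) = d * (n - d) + sumn (bot d).
Proof.
rewrite /top /bot (_ : (n - d).+1 = (n - d) + 1); last by lia.
by rewrite iotaDl sumn_map_add size_iota mulnC.
Qed.

Lemma count_steps (f : nat -> nat) r s :
  (forall t, t < r -> f t.+1 = f t \/ f t.+1 = (f t).+1) ->
  f 0 <= f r /\ count (fun t => (f t == s) && (f t.+1 == s.+1)) (iota 0 r) = (f 0 <= s < f r).
Proof.
elim: r => [|r IH] H; first by split => //=; lia.
have [IH1 IH2] := IH (fun t tr => H t (ltnW tr)).
rewrite (_ : iota 0 r.+1 = iota 0 r ++ [:: r]); last by rewrite -addn1 iotaD.
rewrite count_cat IH2 /=.
case: (H r (ltnSn r)) => ->; split; try lia.
Qed.

Lemma chain_max d n (c : seq (seq nat)) : maxChain d n (fun x => x \in c) ->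
  forall z, inI d n z -> (forall x, x \in c -> leI x z \/ leI z x) -> z \in c.
Proof.
move=> [[Hin Hch] Hmax] z Hz Hcmp.
apply: (Hmax (fun x => x \in c \/ x = z)); last by right.
- split.
  + by move=> x [/Hin|->].
  + move=> x y [Hx|->] [Hy|->].
    * exact: Hch.
    * exact: Hcmp.
    * by case: (Hcmp y Hy); [right|left].
    * by left; apply: leI_refl.
- by move=> x Hx; left.
Qed.

Lemma sorted_le (c : seq (seq nat)) : sorted ltI c -> forall i j, i <= j -> j < size c ->
  leI (nth [::] c i) (nth [::] c j).
Proof.
move=> Hs i j ij jc.
have Hs' : sorted leI c by apply: sub_sorted Hs => x y /andP [].
have Ht : transitive leI by move=> y x z; apply: leI_trans.
have Hr : reflexive leI by move=> x; apply: leI_refl.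
have := sorted_leq_nth Ht Hr [::] Hs'; apply; rewrite ?inE //; lia.
Qed.

Lemma sorted_ne (c : seq (seq nat)) t : sorted ltI c -> t.+1 < size c -> nth [::] c t != nth [::] c t.+1.
Proof. by move=> /(sortedP [::]) H tc; case/andP: (H t tc). Qed.

Lemma chain_ends d n (c : seq (seq nat)) : d <= n -> sorted ltI c ->
  maxChain d n (fun x => x \in c) ->
  [/\ 0 < size c, nth [::] c 0 = bot d & nth [::] c (size c).-1 = top d n].
Proof.
move=> dn Hs Hm; have Hin : forall x, x \in c -> inI d n x by case: Hm => [[]].
have Hb : bot d \in c.
  apply: (chain_max Hm (bot_inI dn)) => x /Hin Hx; right; exact: bot_le Hx.
have Ht : top d n \in c.
  apply: (chain_max Hm (top_inI dn)) => x /Hin Hx; left; exact: le_top Hx.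
have sc : 0 < size c by case: (c) Hb.
split => //.
- have mi : index (bot d) c < size c by rewrite index_mem.
  have H1 := sorted_le Hs (leq0n (index (bot d) c)) mi.
  rewrite nth_index // in H1.
  apply: leI_anti H1 _; apply: bot_le; apply: Hin; exact: mem_nth.
- have mi : index (top d n) c < size c by rewrite index_mem.
  have H1 : leI (nth [::] c (index (top d n) c)) (nth [::] c (size c).-1).
    apply: sorted_le => //; rewrite ?prednK //; rewrite -ltnS prednK //.
  rewrite nth_index // in H1.
  apply: leI_anti _ H1; apply: le_top; apply: Hin; apply: mem_nth; rewrite prednK //.
Qed.

Lemma chain_step d n (c : seq (seq nat)) : sorted ltI c ->
  maxChain d n (fun x => x \in c) ->
  forall t, t.+1 < size c -> exists p, validop d n p /\
     rootop d p.1 p.2 (nth [::] c t) = Some (nth [::] c t.+1).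
Proof.
move=> Hs Hm t tc; have Hin : forall x, x \in c -> inI d n x by case: Hm => [[]].
set x := nth [::] c t; set y := nth [::] c t.+1.
have tc' : t < size c by apply: ltnW.
have Hx : inI d n x by apply: Hin; apply: mem_nth.
have Hy : inI d n y by apply: Hin; apply: mem_nth.
have Hxy : leI x y by apply: sorted_le.
have Hne : x != y by apply: sorted_ne.
have [s [h [z [Hv Hr Hz Hzy [Hxz Hnz]]]]] := cover Hx Hy Hxy Hne.
exists (s, h); split => //=; rewrite Hr; congr Some.
have Hzc : z \in c.
  apply: (chain_max Hm Hz) => w /(nthP [::]) [m mc <-].
  case: (leqP m t) => mt.
  - by left; apply: leI_trans (sorted_le Hs mt tc') Hxz.
  - by right; apply: leI_trans Hzy (sorted_le Hs mt mc).
have [m mc Em] := nthP [::] Hzc.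
case: (leqP m t) => mt.
- have H1 := sorted_le Hs mt tc'; rewrite Em in H1.
  by move: Hnz; rewrite (leI_anti Hxz H1) eqxx.
- have H1 := sorted_le Hs mt mc; rewrite Em in H1.
  exact: leI_anti Hzy H1.
Qed.

Unset Implicit Arguments.
Set Strict Implicit.

Theorem proposition2p14 (d n : nat) :
  1 <= d -> d < n ->
  (* (i) *)
  (forall i j : seq nat, inI d n i -> inI d n j ->
     (leI i j <->
      exists ops : seq (nat * nat),
        all (validop d n) ops /\ applyops d ops (Some i) = Some j)) /\
  (forall c : seq (seq nat),
     sorted ltI c -> maxChain d n (fun x => x \in c) ->
     (* (ii) *)
     (size c = (d * (n - d)).+1 /\
      exists L : seq (nat * nat),
        size L = d * (n - d) /\ all (validop d n) L /\
        (forall t, 1 <= t <= d * (n - d) ->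
           Some (nth [::] c t) =
           rootop d (nth (0, 0) L t.-1).1 (nth (0, 0) L t.-1).2 (nth [::] c t.-1)) /\
        (forall s h, validop d n (s, h) -> count_mem (s, h) L = 1)) /\
     (* (iii) *)
     (forall t, t < d * (n - d) ->
        (forall h, 1 <= h <= t -> n \notin nth [::] c h) ->
        (forall h, t < h <= d * (n - d) -> n \in nth [::] c h) ->
        Some (nth [::] c t.+1) = rootop d n.-1 d (nth [::] c t))).
Proof.
move=> d1 dn; split.
  move=> i j Hi Hj; split; first exact: part_i_fwd.
  move=> [ops [Hv Ha]]; have si : size i = d by case/inIP: Hi.
  exact: (part_i_bwd Hv Ha si).2.
move=> c Hs Hm.
have dn' : d <= n := ltnW dn.
have [sc E0 Er] := chain_ends dn' Hs Hm.
have Hin : forall x, x \in c -> inI d n x by case: Hm => [[]].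
have Hstep := chain_step Hs Hm.
have Hszd : forall t, t < size c -> size (nth [::] c t) = d.
  by move=> t tc; case/inIP: (Hin _ (mem_nth [::] tc)).
have Hsum : forall t, t < size c -> sumn (nth [::] c t) = sumn (bot d) + t.
  elim => [_|t IH tc]; first by rewrite E0 addn0.
  have [p [Hv Hr]] := Hstep t tc; have [-> Hn _] := rootop_inv Hr.
  have sz := Hszd t (ltnW tc).
  rewrite (_ : set_nth 0 _ _ _ = bump p.2.-1 (nth [::] c t)); last by rewrite /bump Hn.
  rewrite sumn_bump; first by rewrite IH ?(ltnW tc) // addnS.
  by move: Hv; rewrite /validop sz; lia.
have Hsize : size c = (d * (n - d)).+1.
  have := Hsum (size c).-1; rewrite prednK // leqnn Er sumn_top => /(_ isT) H.
  by rewrite -(prednK sc); congr S; lia.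
set r := d * (n - d).
pose P t (p : nat * nat) := (t.+1 < size c) ==>
  (validop d n p && (rootop d p.1 p.2 (nth [::] c t) == Some (nth [::] c t.+1))).
have exP : forall t, exists p, P t p.
  move=> t; case: (ltnP t.+1 (size c)) => tc.
  - by have [p [Hv Hr]] := Hstep t tc; exists p; rewrite /P tc Hv Hr eqxx.
  - by exists (0, 0); rewrite /P ltnNge tc.
pose g t := xchoose (exP t).
have Hg : forall t, t < r -> validop d n (g t) /\
    rootop d (g t).1 (g t).2 (nth [::] c t) = Some (nth [::] c t.+1).
  move=> t tr; have /implyP H := xchooseP (exP t).
  have tc : t.+1 < size c by rewrite Hsize ltnS.
  by case/andP: (H tc) => -> /eqP ->.
split; last first.
  move=> t tr Hno Hyes.
  have [Hv Hr] := Hg t tr.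
  have tc : t < size c by rewrite Hsize; apply: (leq_trans tr).
  have nt : n \notin nth [::] c t.
    case: t {Hv Hr tc} tr Hyes Hno => [|t] tr Hyes Hno.
    - by rewrite E0 /bot mem_iota; lia.
    - by apply: Hno; lia.
  have nt1 : n \in nth [::] c t.+1 by apply: Hyes; lia.
  have sz := Hszd t tc.
  case E: (g t) Hv Hr => [s' h'] Hv Hr.
  have [Ey Hn Hc] := rootop_inv Hr; rewrite /= in Ey Hn Hc Hr.
  have hd : h'.-1 < d by move: Hv; rewrite /validop /=; lia.
  move/(nthP 0): nt1 => [m mlt]; rewrite Ey nth_set_nth /=.
  case: (eqVneq m h'.-1) => [_ Em|mh Em]; last first.
    move: mlt; rewrite Ey size_set_nth sz => mlt.
    by move: nt; rewrite -Em mem_nth // sz; move: mlt hd => /=; lia.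
  subst n.
  have Hh : h' = d.
    case/orP: Hc => [/eqP //|Hc].
    have Hi : inI d s'.+1 (nth [::] c t) by apply: Hin; apply: mem_nth.
    case/inIP: Hi => _ [_ H2].
    case: (ltnP h' d) => hd'.
    - by have := H2 h' hd'; lia.
    - by move: Hv; rewrite /validop /=; lia.
  by rewrite Hh in Hr; rewrite -Ey -Hr.
split => //.
exists (mkseq g r); split; first by rewrite size_mkseq.
split.
  apply/(all_nthP (0,0)) => i; rewrite size_mkseq => ir; rewrite nth_mkseq //.
  exact: (Hg i ir).1.
split.
  move=> t /andP [t1 tr]; rewrite nth_mkseq; last by lia.
  have := (Hg t.-1 (ltac:(lia))).2; rewrite prednK //.
move=> s h Hv.
have hd : 1 <= h <= d by move: Hv; rewrite /validop /=; lia.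
have hs : h <= s < n - d + h by move: Hv; rewrite /validop /=; lia.
rewrite /mkseq count_map.
pose f t := nth 0 (nth [::] c t) h.-1.
have Hgt : forall t, t < r -> (g t == (s, h)) = ((f t == s) && (f t.+1 == s.+1)).
  move=> t tr; have [Hv' Hr'] := Hg t tr.
  case E: (g t) Hv' Hr' => [s' h'] Hv' Hr'.
  have [Ey Hn _] := rootop_inv Hr'; rewrite /= in Ey Hn.
  rewrite /f Ey nth_set_nth /=.
  case: (eqVneq h.-1 h'.-1) => e.
  - have e' : h' = h by move: Hv'; rewrite /validop /=; lia.
    by rewrite e Hn e' xpair_eqE eqxx andbT eqSS andbb.
  - have hh : (h' == h) = false by apply/eqP => E'; rewrite E' eqxx in e.
    rewrite xpair_eqE hh andbF.
    case: (eqVneq (nth 0 (nth [::] c t) h.-1) s) => // ->.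
    by rewrite (_ : (s == s.+1) = false) //; apply/eqP; lia.
have Hf : forall t, t < r -> f t.+1 = f t \/ f t.+1 = (f t).+1.
  move=> t tr; have [Hv' Hr'] := Hg t tr.
  case E: (g t) Hv' Hr' => [s' h'] Hv' Hr'.
  have [Ey Hn _] := rootop_inv Hr'; rewrite /= in Ey Hn.
  rewrite /f Ey nth_set_nth /=.
  case: (eqVneq h.-1 h'.-1) => e; last by left.
  by right; rewrite e Hn.
rewrite (eq_in_count (a2 := fun t => (f t == s) && (f t.+1 == s.+1))); last first.
  by move=> t; rewrite mem_iota => /andP [_ tr]; apply: Hgt.
have [_ ->] := count_steps s Hf.
have f0 : f 0 = h by rewrite /f E0 /bot nth_iota; lia.
have fr : f r = n - d + h.
  rewrite /f (_ : r = (size c).-1); last by rewrite Hsize.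
  by rewrite Er /top nth_iota; lia.
rewrite f0 fr; lia.
Qed.
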